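(* Let $R$ and $Q$ be rod sets. (a) There exist a rod set $R'\equiv R$ and an expansion subtree $\mathsf T$ of $\mathrm{Tree}(R')$ with $\langle\mathrm{Inner}(\mathsf T)\rangle\equiv Q$. (b) For any rod set $R'\equiv R$ and any expansion subtree $\mathsf T$ of $\mathrm{Tree}(R')$ with $\langle\mathrm{Inner}(\mathsf T)\rangle\equiv Q$, one has $$\langle\mathrm{Leaves}(\mathsf T)\rangle\equiv R\cup\overline{Q}\cup QR .$$
   Context: A rod is a triple $(r,c,\varepsilon)$ with $r$ a positive integer (length), $c$ a tag (color) and $\varepsilon\in\{\pm1\}$ (sign); rods of sign $-1$ are antirods. A rod set is a set of rods with finitely many rods of each length. $C(n,R)$ is the number of positive rods of length $n$ in $R$ minus the number of antirods of length $n$. Rod sets $R,S$ are equivalent, $R\equiv S$, if $C(n,R)=C(n,S)$ for all $n>0$ (equivalently, one is obtained from the other by adding/deleting pairs consisting of a rod and an antirod of the same length). Unions of rod sets are disjoint (multiset) unions; $\overline{Q}$ is $Q$ with all signs reversed; the concatenation $QR$ is the rod set with one rod for each pair $(q,r)\in Q\times R$, of length $\operatorname{len}(q)+\operatorname{len}(r)$ and sign $\operatorname{sign}(q)\operatorname{sign}(r)$. A train built from $R$ is a finite sequence of rods of $R$ (the empty train is $\Lambda$), with length the sum of lengths and sign the product of signs; for a set $X$ of trains, $\langle X\rangle$ is the rod set with one rod, of the same length and sign, for each nonempty train in $X$. $\mathrm{Tree}(R)$ is the rooted tree with nodes the trains built from $R$, root $\Lambda$, and children of $\tau$ the trains $\tau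 k$, $k\in R$ (one per rod). An expansion subtree $\mathsf T$ is a rooted subtree containing all children of the root, and containing all children of any node of which it contains at least one child; $\mathrm{Inner}(\mathsf T)$ is the set of non-root nodes with children in $\mathsf T$, $\mathrm{Leaves}(\mathsf T)$ the set of nodes of $\mathsf T$ without children in $\mathsf T$. *)

(* Defs.v *)
From mathcomp Require Import all_boot.
From mathcomp Require Import ssralg ssrint.
From mathcomp Require Import boolp.
Set Implicit Arguments. Unset Strict Implicit. Unset Printing Implicit Defensive.

(* A rod set: for each length n > 0, the finite list of signs of its rods of
   length n (true = +1 rod, false = -1 antirod).  The rods of length n are
   the pairs (n, i) with i < size (R n); the index i plays the role of the tag
   (colour).  The value R 0 is irrelevant (there are no rods of length 0). *)
Definition rodset := nat -> seq bool.

Definition rod := (nat * nat)%type.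

Definition is_rod (R : rodset) (k : rod) : bool := (0 < k.1) && (k.2 < size (R k.1)).
Definition rod_sign (R : rodset) (k : rod) : bool := nth true (R k.1) k.2.

Definition C (n : nat) (R : rodset) : int :=
  (count id (R n))%:Z - (count negb (R n))%:Z.

Definition rod_equiv (R S : rodset) : Prop := forall n, 0 < n -> C n R = C n S.

Definition rod_union (R S : rodset) : rodset := fun n => R n ++ S n.
Definition rod_bar (Q : rodset) : rodset := fun n => map negb (Q n).
Definition rod_concat (Q R : rodset) : rodset := fun n =>
  flatten [seq [seq (s1 == s2) | s1 <- Q a, s2 <- R (n - a)] | a <- iota 1 n.-1].

Definition train := seq rod.
Definition is_train (R : rodset) (t : train) : bool := all (is_rod R) t.
Definition train_len (t : train) : nat := sumn (map fst t).
Definition train_sign (R : rodset) (t : train) : bool :=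
  foldr (fun k b => rod_sign R k == b) true t.

Fixpoint trains_fuel (R : rodset) (f n : nat) : seq train :=
  if n == 0 then [:: [::]] else
  match f with
  | 0 => [::]
  | f'.+1 => flatten [seq [seq (a, i) :: t | i <- iota 0 (size (R a)),
                                             t <- trains_fuel R f' (n - a)]
                     | a <- iota 1 n]
  end.
Definition trains_of_len (R : rodset) (n : nat) : seq train := trains_fuel R n n.

(* <X> : one rod per nonempty train of X (X a set of trains built from R) *)
Definition rods_of (R : rodset) (X : train -> Prop) : rodset := fun n =>
  [seq train_sign R t | t <- trains_of_len R n & `[< X t >]].

(* expansion subtrees of Tree(R); children of t are rcons t k, k a rod of R *)
Definition expansion_subtree (R : rodset) (T : train -> Prop) : Prop :=
  [/\ (forall t, T t -> is_train R t),
      T [::],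
      (forall t k, T (rcons t k) -> T t),
      (forall k, is_rod R k -> T [:: k]) &
      (forall t k k', T (rcons t k) -> is_rod R k' -> T (rcons t k'))].

Definition Inner (T : train -> Prop) : train -> Prop :=
  fun t => [/\ T t, t <> [::] & exists k, T (rcons t k)].
Definition Leaves (T : train -> Prop) : train -> Prop :=
  fun t => T t /\ forall k, ~ T (rcons t k).

(* Main.v *)
Require Import Defs.
From mathcomp Require Import all_boot.
From mathcomp Require Import ssralg ssrint.
From mathcomp Require Import all_boot ssralg ssrint boolp.
From mathcomp Require Import zify ring.
Set Implicit Arguments. Unset Strict Implicit. Unset Printing Implicit Defensive.

Lemma uniq_flatten_map (A B : eqType) (f : A -> seq B) (g : B -> A) (s : seq A) :
  uniq s -> (forall a, uniq (f a)) -> (forall a x, x \in f a -> g x = a) ->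
  uniq (flatten (map f s)).
Proof.
move=> us uf hg; elim: s us => [|a s IH] //= /andP [nas us].
rewrite cat_uniq uf IH // andbT; apply/hasP => [[x /flattenP [r /mapP [b bs ->]] xb xa]].
by move: nas; rewrite -(hg _ _ xa) (hg _ _ xb) bs.
Qed.

Lemma train_len_pos R t : is_train R t -> t != [::] -> 0 < train_len t.
Proof. by case: t => [|k t] //= /andP [/andP [k1 _] _] _; rewrite ltn_addr. Qed.

Lemma is_train_cons R k t : is_train R (k :: t) = is_rod R k && is_train R t.
Proof. by []. Qed.
Lemma train_len_cons k t : train_len (k :: t) = k.1 + train_len t.
Proof. by []. Qed.

Lemma mem_trains_fuel R f n t : n <= f ->
  (t \in trains_fuel R f n) = is_train R t && (train_len t == n).
Proof.
elim: f n t => [|f IH] n t.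
  rewrite leqn0 => /eqP -> /=; rewrite inE.
  case: t => [|k t] //=; apply/esym/negbTE; rewrite negb_and.
  case/boolP: (is_rod R k) => //= /andP [k1 _]; apply/orP; right; by rewrite /train_len /= -lt0n ltn_addr.
move=> nf /=; case: eqP => [->|/eqP n0].
  rewrite inE; case: t => [|k t] //=; apply/esym/negbTE; rewrite negb_and.
  case/boolP: (is_rod R k) => //= /andP [k1 _]; apply/orP; right; by rewrite /train_len /= -lt0n ltn_addr.
apply/idP/idP.
  move=> /flattenP [r /mapP [a]]; rewrite mem_iota => /andP [a1 an] -> /allpairsPdep [i [t' [ii ht' ->]]].
  rewrite IH in ht'; last by lia.
  move: ii ht'; rewrite mem_iota add0n => /andP [_ ii] /andP [tt /eqP lt].
  rewrite is_train_cons /is_rod /= a1 ii tt /train_len /= -/(train_len t') lt eqn_leq; apply/andP; split; lia.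
case: t => [|[a i] t]; first by move=> /andP [_ /eqP h]; move: n0; rewrite -h.
rewrite is_train_cons train_len_cons /is_rod /=.
case/andP => /andP [/andP /= [a1 ii] tt] /eqP ln.
apply/flattenP; exists [seq (a, i0) :: t0 | i0 <- iota 0 (size (R a)), t0 <- trains_fuel R f (n - a)].
  apply/mapP; exists a => //; rewrite mem_iota a1 /=; lia.
apply/allpairsPdep; exists i, t; split => //; first by rewrite mem_iota.
rewrite IH; last by lia.
rewrite tt /=; apply/eqP; lia.
Qed.

Lemma uniq_trains_fuel R f n : uniq (trains_fuel R f n).
Proof.
elim: f n => [|f IH] n /=; first by case: eqP.
case: eqP => // _.
apply: (uniq_flatten_map (g := fun x : train => (head (0,0) x).1)); first exact: iota_uniq.
  move=> a; apply: allpairs_uniq; [exact: iota_uniq | exact: IH |].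
  by move=> [x1 y1] [x2 y2] _ _ /= [-> ->].
by move=> a x /allpairsPdep [i [t [_ _ ->]]].
Qed.

Lemma mem_trains R n t : (t \in trains_of_len R n) = is_train R t && (train_len t == n).
Proof. exact: mem_trains_fuel. Qed.
Lemma uniq_trains R n : uniq (trains_of_len R n).
Proof. exact: uniq_trains_fuel. Qed.

Import GRing.Theory.
Local Open Scope ring_scope.

Definition zb (b : bool) : int := if b then 1 else -1.
Definition Cs (s : seq bool) : int := \sum_(b <- s) zb b.

Lemma C_Cs n R : C n R = Cs (R n).
Proof.
rewrite /C /Cs; elim: (R n) => [|b s IH]; first by rewrite big_nil.
rewrite big_cons -IH; case: b => /=; rewrite !PoszD; ring.
Qed.

Lemma zb_eq x y : zb (x == y) = zb x * zb y.
Proof. by case: x; case: y. Qed.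

Lemma zb_sign R t : zb (train_sign R t) = \prod_(k <- t) zb (rod_sign R k).
Proof.
rewrite /train_sign; elim: t => [|k t IH] /=; first by rewrite big_nil.
by rewrite big_cons zb_eq IH.
Qed.

Lemma zb_sign_rcons R t k : zb (train_sign R (rcons t k)) = zb (train_sign R t) * zb (rod_sign R k).
Proof. by rewrite !zb_sign big_rcons. Qed.

Lemma zb_sign1 R k : zb (train_sign R [:: k]) = zb (rod_sign R k).
Proof. by rewrite zb_sign big_seq1. Qed.

Lemma C_rods_of R X n : C n (rods_of R X) =
  \sum_(t <- trains_of_len R n | `[< X t >]) zb (train_sign R t).
Proof. by rewrite C_Cs /Cs /rods_of big_map big_filter. Qed.

Definition rods (R : rodset) m : seq rod := [seq (m, i) | i <- iota 0 (size (R m))].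

Lemma mem_rods R m k : (k \in rods R m) = (k.1 == m) && (k.2 < size (R m)).
Proof.
case: k => a i /=; apply/mapP/andP => [[j] | [/eqP -> h]].
  by rewrite mem_iota add0n => /andP [_ h] [-> ->].
by exists i; rewrite // mem_iota add0n h.
Qed.

Lemma uniq_rods R m : uniq (rods R m).
Proof. by rewrite map_inj_uniq ?iota_uniq // => x y [->]. Qed.

Lemma Cs_rods R m : \sum_(k <- rods R m) zb (rod_sign R k) = Cs (R m).
Proof. by rewrite big_map /Cs (big_nth true) /index_iota subn0. Qed.

Lemma Cs_cat s1 s2 : Cs (s1 ++ s2) = Cs s1 + Cs s2.
Proof. by rewrite /Cs big_cat. Qed.

Lemma Cs_neg s : Cs (map negb s) = - Cs s.
Proof.
rewrite /Cs big_map -sumrN; apply: eq_bigr => b _; by case: b.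
Qed.

Lemma Cs_concat Q R n : Cs (rod_concat Q R n) =
  \sum_(a <- iota 1 n.-1) Cs (Q a) * Cs (R (n - a)%N).
Proof.
rewrite /Cs /rod_concat big_flatten big_map; apply: eq_bigr => a _.
rewrite big_allpairs_dep mulr_suml; apply: eq_bigr => s1 _.
rewrite mulr_sumr; apply: eq_bigr => s2 _; exact: zb_eq.
Qed.

Lemma train_len_rcons t k : train_len (rcons t k) = (train_len t + k.1)%N.
Proof. rewrite /train_len map_rcons; elim: t => [|k' t IH] /=; first by rewrite addn0. by rewrite IH addnA. Qed.

Lemma is_train_rcons R t k : is_train R (rcons t k) = is_train R t && is_rod R k.
Proof. by rewrite /is_train all_rcons andbC. Qed.

Lemma sumT R T n : expansion_subtree R T -> (0 < n)%N ->
  \sum_(t <- trains_of_len R n | `[< T t >]) zb (train_sign R t) =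
  Cs (R n) + \sum_(a <- iota 1 n.-1)
     (\sum_(t <- trains_of_len R a | `[< Inner T t >]) zb (train_sign R t)) * Cs (R (n - a)%N).
Proof.
case=> Ttr T0 Tpre Troot Tsib n0.
pose L := [seq [:: k] | k <- rods R n] ++
  flatten [seq [seq rcons p k | p <- [seq p <- trains_of_len R a | `[< Inner T p >]],
                                k <- rods R (n - a)] | a <- iota 1 n.-1].
have uL : uniq L.
  rewrite cat_uniq map_inj_uniq ?uniq_rods; last by move=> x y [].
  rewrite (uniq_flatten_map (g := fun x => (train_len x - (last (0,0) x).1)%N)).
  - rewrite andbT /=; apply/hasP => -[x /flattenP [r /mapP [a _ ->]] /allpairsPdep [p [k [hp _ ->]]]].
    move=> /mapP [k' _] /(congr1 size); rewrite size_rcons /=; case.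
    move: hp; rewrite mem_filter => /andP [/asboolP [_ pn _] _] /eqP; rewrite size_eq0.
    by move/eqP.
  - exact: iota_uniq.
  - move=> a; apply: allpairs_uniq; [by rewrite filter_uniq // uniq_trains | exact: uniq_rods|].
    by move=> [x1 y1] [x2 y2] _ _ /= /rcons_inj [-> ->].
  - move=> a x /allpairsPdep [p [k [hp hk ->]]].
    rewrite train_len_rcons last_rcons addnK.
    by move: hp; rewrite mem_filter mem_trains => /andP [_ /andP [_ /eqP]].
have pL : perm_eq [seq t <- trains_of_len R n | `[< T t >]] L.
  apply: uniq_perm; [by rewrite filter_uniq // uniq_trains | exact: uL |].
  move=> t; rewrite mem_filter mem_trains; apply/idP/idP.
    case/andP => /asboolP Tt /andP [_ /eqP lt].
    case/lastP: t Tt lt => [|p k] Tt lt; first by move: n0; rewrite -lt.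
    have := Ttr _ Tt; rewrite is_train_rcons => /andP [tp /andP [k1 k2]].
    rewrite train_len_rcons in lt.
    case: p Tt lt tp => [|k0 p] Tt lt tp.
      rewrite mem_cat; apply/orP; left; apply/mapP; exists k => //.
      by rewrite mem_rods -lt /= add0n eqxx k2.
    rewrite mem_cat; apply/orP; right; apply/flattenP.
    set p' := k0 :: p in Tt lt tp *.
    have lp : (0 < train_len p')%N by apply: (train_len_pos tp).
    eexists; first by apply/mapP; exists (train_len p'); last reflexivity; rewrite mem_iota; lia.
    apply/allpairsPdep; exists p', k; split => //.
      rewrite mem_filter mem_trains tp eqxx /= !andbT; apply/asboolP; split => //; first exact: (Tpre _ k).
      by exists k.
    have -> : (n - train_len p' = k.1)%N by rewrite -lt addKn.
    by rewrite mem_rods eqxx k2.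
  rewrite mem_cat => /orP [/mapP [k] | /flattenP [r /mapP [a]]].
    rewrite mem_rods => /andP [/eqP k1 k2] ->.
    have rk : is_rod R k by rewrite /is_rod k1 n0.
    by rewrite (asboolT (Troot _ rk)) /= /is_train /= rk /train_len /= addn0 k1 eqxx.
  rewrite mem_iota => /andP [a1 an] -> /allpairsPdep [p [k [hp hk ->]]].
  move: hp hk; rewrite mem_filter mem_trains mem_rods => /andP [/asboolP [Tp pn [k0 Tk0]] /andP [tp /eqP lp]].
  move=> /andP [/eqP k1 k2].
  have rk : is_rod R k by rewrite /is_rod k1 k2 andbT; lia.
  rewrite (asboolT (Tsib _ _ _ Tk0 rk)) /= is_train_rcons tp rk train_len_rcons lp k1.
  apply/eqP; lia.
rewrite -big_filter (perm_big _ pL) big_cat big_map /=.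
under eq_bigr do rewrite zb_sign1.
rewrite Cs_rods; congr (_ + _).
rewrite big_flatten big_map; apply: eq_bigr => a _.
rewrite big_allpairs_dep big_filter mulr_suml; apply: eq_bigr => p _.
by rewrite -Cs_rods mulr_sumr; apply: eq_bigr => k _; rewrite zb_sign_rcons.
Qed.

Lemma sumL R T n : (0 < n)%N ->
  \sum_(t <- trains_of_len R n | `[< Leaves T t >]) zb (train_sign R t) =
  \sum_(t <- trains_of_len R n | `[< T t >]) zb (train_sign R t) -
  \sum_(t <- trains_of_len R n | `[< Inner T t >]) zb (train_sign R t).
Proof.
move=> n0; rewrite [X in _ = X - _](bigID (fun t => `[< Inner T t >])) /=.
have e1 : forall t, `[< T t >] && `[< Inner T t >] = `[< Inner T t >].
  move=> t; apply/andP/asboolP => [[_ /asboolP //] | h]; split; apply/asboolP => //.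
  by move: h; rewrite /Inner; case.
have -> : \sum_(i <- trains_of_len R n | `[< T i >] && `[< Inner T i >]) zb (train_sign R i)
  = \sum_(t <- trains_of_len R n | `[< Inner T t >]) zb (train_sign R t).
  by apply: eq_bigl => t; exact: e1.
rewrite addrAC subrr add0r -[LHS]big_filter -[RHS]big_filter.
congr bigop; apply: eq_in_filter => t; rewrite mem_trains => /andP [tt /eqP lt].
have tn : t <> [::] by move=> e; move: n0; rewrite -lt e.
apply/asboolP/andP => [[Tt nc] | [/asboolP Tt /asboolP ni]].
  split; first exact/asboolP.
  by apply/asboolP => -[_ _ [k Tk]]; exact: (nc k).
split => // k Tk; apply: ni; split => //; by exists k.
Qed.

Lemma part_b R Q R' T : rod_equiv R' R -> expansion_subtree R' T ->
  rod_equiv (rods_of R' (Inner T)) Q ->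
  rod_equiv (rods_of R' (Leaves T))
            (rod_union (rod_union R (rod_bar Q)) (rod_concat Q R)).
Proof.
move=> hR hT hQ n n0.
rewrite C_rods_of sumL // (sumT hT n0) C_Cs /rod_union !Cs_cat Cs_neg Cs_concat.
have -> : Cs (R' n) = Cs (R n) by rewrite -!C_Cs hR.
have -> : \sum_(t <- trains_of_len R' n | `[< Inner T t >]) zb (train_sign R' t) = Cs (Q n).
  by rewrite -C_rods_of hQ // C_Cs.
have -> : \sum_(a <- iota 1 n.-1)
   (\sum_(t <- trains_of_len R' a | `[< Inner T t >]) zb (train_sign R' t)) * Cs (R' (n - a)%N)
  = \sum_(a <- iota 1 n.-1) Cs (Q a) * Cs (R (n - a)%N).
  apply: eq_big_seq => a; rewrite mem_iota => /andP [a1 an].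
  rewrite -C_rods_of hQ // -!C_Cs hR //; lia.
ring.
Qed.

Definition Rext (R Q : rodset) : rodset := fun n => R n ++ Q n ++ map negb (Q n).
Definition inQ (R Q : rodset) (k : rod) : bool :=
  (size (R k.1) <= k.2)%N && (k.2 < size (R k.1) + size (Q k.1))%N.
Definition Tex (R Q : rodset) (t : train) : Prop :=
  is_train (Rext R Q) t /\ ((size t <= 1)%N \/ (size t = 2 /\ inQ R Q (head (0,0) t))).

Lemma Tex_sub R Q : expansion_subtree (Rext R Q) (Tex R Q).
Proof.
split.
- by move=> t [].
- by split => //; left.
- move=> t k [] ; rewrite is_train_rcons size_rcons => /andP [tt _] [h|[h1 h2]].
    by split => //; left; lia.
  split => //; left; lia.
- by move=> k rk; split; [rewrite /is_train /= rk | left].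
- move=> t k k' []; rewrite !is_train_rcons !size_rcons => /andP [tt _] h rk'.
  split; first by rewrite is_train_rcons tt rk'.
  rewrite size_rcons; case: h => [h|[h1 h2]]; [by left | right; split => //].
  by case: t tt h1 h2.
Qed.

Lemma part_a R Q : exists (R' : rodset) (T : train -> Prop),
  [/\ rod_equiv R' R, expansion_subtree R' T & rod_equiv (rods_of R' (Inner T)) Q].
Proof.
exists (Rext R Q), (Tex R Q); split; [| exact: Tex_sub |].
  by move=> n n0; rewrite !C_Cs /Rext /= !Cs_cat Cs_neg; ring.
move=> n n0; rewrite C_rods_of C_Cs.
pose L := [seq [:: (n, size (R n) + j)%N] | j <- iota 0 (size (Q n))].
have uL : uniq L by rewrite map_inj_uniq ?iota_uniq // => x y [] /addnI.
have pL : perm_eq [seq t <- trains_of_len (Rext R Q) n | `[< Inner (Tex R Q) t >]] L.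
  apply: uniq_perm; [by rewrite filter_uniq // uniq_trains | exact: uL |].
  move=> t; rewrite mem_filter mem_trains; apply/idP/idP.
    case/andP => /asboolP [[tt _] tn [k [tk hk]]] /andP [_ /eqP lt].
    rewrite size_rcons in hk; case: hk => [h | [h1 h2]].
      by case: t tn h {tt lt tk}.
    case: t tn h1 h2 tt lt tk => [|k0 [|//]] //= _ _ h2 tt lt _.
    move: tt lt; rewrite /is_train /= andbT /train_len /= addn0 => _ lt.
    move: h2; rewrite /inQ lt => /andP [h1 h2].
    apply/mapP; exists (k0.2 - size (R n))%N; first by rewrite mem_iota leq0n add0n ltn_subLR.
    by rewrite subnKC //; case: k0 lt {h1 h2} => a b /= ->.
  move=> /mapP [j]; rewrite mem_iota add0n => /andP [_ jl] ->.
  have rk : is_rod (Rext R Q) (n, size (R n) + j)%N.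
    by rewrite /is_rod /= n0 /Rext !size_cat; lia.
  have tk : is_train (Rext R Q) [:: (n, size (R n) + j)%N] by rewrite /is_train /= rk.
  rewrite tk /train_len /= addn0 eqxx andbT; apply/asboolP; split => //.
    by split => //; left.
  exists (n, size (R n) + j)%N; split.
    by rewrite is_train_rcons tk rk.
  by right; split => //; rewrite /inQ /=; lia.
rewrite -big_filter (perm_big _ pL) big_map /Cs (big_nth true) /index_iota subn0.
apply: eq_big_seq => j; rewrite mem_iota add0n => /andP [_ jl].
by rewrite zb_sign1 /rod_sign /= /Rext nth_cat ltnNge leq_addr /= addKn nth_cat jl.
Qed.

Local Close Scope ring_scope.

Theorem mainTheorem5 (R Q : rodset) :
  (exists (R' : rodset) (T : train -> Prop),
      [/\ rod_equiv R' R, expansion_subtree R' T &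
          rod_equiv (rods_of R' (Inner T)) Q]) /\
  (forall (R' : rodset) (T : train -> Prop),
      rod_equiv R' R -> expansion_subtree R' T ->
      rod_equiv (rods_of R' (Inner T)) Q ->
      rod_equiv (rods_of R' (Leaves T))
                (rod_union (rod_union R (rod_bar Q)) (rod_concat Q R))).
Proof. split; [exact: part_a | exact: part_b]. Qed.
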